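(* Let $p+q=4k+1$ with $k\ge1$. If $p-4\ge1$ and $q\ge1$, then $\mathbb{O}_{p,q}\simeq\mathbb{O}_{p-4,q+4}$. If $p\ge1$, $q-1\ge1$ and $p$ is even, then $\mathbb{O}_{p,q}\simeq\mathbb{O}_{p+1,q-1}$. (The isomorphisms preserve the $\mathbb{Z}_2^n$-graded structure.)
   Context: $\mathbb{Z}_2=\{0,1\}$. For $p+q=n\ge3$, $\mathbb{O}_{p,q}$ is the real algebra with basis $\{u_x: x\in\mathbb{Z}_2^n\}$ and product $u_x\cdot u_y=(-1)^{f(x,y)}u_{x+y}$, where $f(x,y)=\sum_{1\le i<j<k\le n}(x_ix_jy_k+x_iy_jx_k+y_ix_jx_k)+\sum_{1\le i\le j\le n}x_iy_j+\sum_{1\le i\le p}x_iy_i$. Homogeneous elements are scalar multiples of some $u_x$. *)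

(* Defs.v *)
From HB Require Import structures.
From mathcomp Require Import all_boot all_order all_algebra.
From mathcomp Require Import reals.
Set Implicit Arguments. Unset Strict Implicit. Unset Printing Implicit Defensive.
Import Order.TTheory GRing.Theory Num.Theory.
Local Open Scope ring_scope.

(* Z_2^n, with coordinates indexed 0..n-1 (coordinate i+1 of the paper). *)
Notation Z2n n := {ffun 'I_n -> bool}.

Definition z2add n (x y : Z2n n) : Z2n n := [ffun i => x i (+) y i].

(* the twisting function f of the paper for O_{p,q}, n = p + q (as a natural
   number; only its parity matters).  Paper indices 1..n become 0..n-1, so
   "i <= p" becomes "i < p". *)
Definition ftw (n p : nat) (x y : Z2n n) : nat := (
  (\sum_(i < n) \sum_(j < n) \sum_(k < n)
      ((i < j) && (j < k))%N *
      (x i * x j * y k + x i * y j * x k + y i * x j * x k))%N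
  + (\sum_(i < n) \sum_(j < n) (i <= j)%N * (x i * y j))%N
  + (\sum_(i < n) (i < p) * (x i * y i)))%N.

Notation Oalg R n := {ffun Z2n n -> R^o}.

Section Alg.
Variable R : realType.

Definition ub n (x : Z2n n) : Oalg R n := [ffun z => (z == x)%:R].

Definition omul (n p : nat) (a b : Oalg R n) : Oalg R n :=
  \sum_(x : Z2n n) \sum_(y : Z2n n)
     (a x * b y * (-1) ^+ @ftw n p x y) *: ub (z2add x y).

(* graded isomorphism O_{p,q} ~ O_{p',q'} with p+q = p'+q' = n: a bijective
   R-linear multiplicative map sending homogeneous elements (multiples of
   basis elements) to homogeneous elements. *)
Definition graded_iso (n p p' : nat) : Prop :=
  exists phi : Oalg R n -> Oalg R n,
    [/\ forall a b, phi (a + b) = phi a + phi b,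
        forall (c : R) a, phi (c *: a) = c *: phi a,
        bijective phi,
        forall a b, phi (@omul n p a b) = @omul n p' (phi a) (phi b)
      & forall x : Z2n n, exists (y : Z2n n) (c : R),
          c != 0 /\ phi (ub x) = c *: ub y].
End Alg.

(* Main.v *)
Require Import Defs.
From HB Require Import structures.
From mathcomp Require Import all_boot all_order all_algebra.
From mathcomp Require Import reals.
From mathcomp Require Import zify ring.
Set Implicit Arguments. Unset Strict Implicit. Unset Printing Implicit Defensive.


Lemma bigxorD (I : Type) (r : seq I) (P : pred I) (F G : I -> bool) :
  \big[addb/false]_(i <- r | P i) (F i (+) G i) =
  (\big[addb/false]_(i <- r | P i) F i) (+) (\big[addb/false]_(i <- r | P i) G i).
Proof. exact: big_split. Qed.

Lemma bigxor_andl (I : Type) (r : seq I) (P : pred I) b (F : I -> bool) :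
  \big[addb/false]_(i <- r | P i) (b && F i) = b && \big[addb/false]_(i <- r | P i) F i.
Proof. by case: b => //=; rewrite big1. Qed.

Lemma odd_sum (I : Type) (r : seq I) (P : pred I) (F : I -> nat) :
  odd (\sum_(i <- r | P i) F i) = \big[addb/false]_(i <- r | P i) odd (F i).
Proof. exact: (big_morph odd oddD). Qed.

Section Z2.
Variable n : nat.
Implicit Types x y z m u v : Z2n n.

Definition z0 : Z2n n := [ffun=> false].
Definition ones : Z2n n := [ffun=> true].
Local Notation "x +' y" := (z2add x y) (at level 50, left associativity).

Lemma z2addC x y : x +' y = y +' x.
Proof. by apply/ffunP=> i; rewrite !ffunE addbC. Qed.
Lemma z2addA x y z : x +' (y +' z) = x +' y +' z.
Proof. by apply/ffunP=> i; rewrite !ffunE addbA. Qed.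
Lemma z2addxx x : x +' x = z0.
Proof. by apply/ffunP=> i; rewrite !ffunE addbb. Qed.
Lemma z2addx0 x : x +' z0 = x.
Proof. by apply/ffunP=> i; rewrite !ffunE addbF. Qed.
Lemma z2add0x x : z0 +' x = x.
Proof. by rewrite z2addC z2addx0. Qed.
Lemma z2addK x y : x +' y +' y = x.
Proof. by rewrite -z2addA z2addxx z2addx0. Qed.
Lemma z2addKl x y : x +' (x +' y) = y.
Proof. by rewrite z2addA z2addxx z2add0x. Qed.

Definition tt3 x y (i j k : 'I_n) : bool :=
  (x i && x j && y k) (+) (x i && y j && x k) (+) (y i && x j && x k).

Definition Fb (p : nat) x y : bool :=
  (\big[addb/false]_(i < n) \big[addb/false]_(j < n) \big[addb/false]_(k < n)
      (((i < j) && (j < k)) && tt3 x y i j k))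
  (+) (\big[addb/false]_(i < n) \big[addb/false]_(j < n) ((i <= j) && (x i && y j)))
  (+) (\big[addb/false]_(i < n) ((i < p) && (x i && y i))).

Lemma odd_ftw p x y : odd (ftw p x y) = Fb p x y.
Proof.
rewrite /ftw /Fb !oddD !odd_sum; congr (_ (+) _ (+) _).
- apply: eq_bigr => i _; rewrite odd_sum; apply: eq_bigr => j _; rewrite odd_sum.
  apply: eq_bigr => k _; by rewrite oddM !oddD !oddM !oddb.
- apply: eq_bigr => i _; rewrite odd_sum; apply: eq_bigr => j _.
  by rewrite !oddM !oddb.
- by apply: eq_bigr => i _; rewrite !oddM !oddb.
Qed.

Definition dlt (h : Z2n n -> Z2n n -> bool) x y z :=
  h y z (+) h (x +' y) z (+) h x (y +' z) (+) h x y.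
Definition phi3 (h : Z2n n -> Z2n n -> bool) x y z :=
  h (x +' y +' z) (x +' y +' z) (+) h (x +' y) (x +' y) (+) h (x +' z) (x +' z)
  (+) h (y +' z) (y +' z) (+) h x x (+) h y y (+) h z z.
Definition good h := forall x y z, dlt h x y z = phi3 h x y z.

Lemma good_sum (I : finType) (H : I -> Z2n n -> Z2n n -> bool) :
  (forall i, good (H i)) -> good (fun x y => \big[addb/false]_(i : I) H i x y).
Proof.
move=> G x y z; rewrite /dlt /phi3 -!bigxorD; apply: eq_bigr => i _; exact: G.
Qed.

Lemma good_ext h1 h2 : (forall x y, h1 x y = h2 x y) -> good h1 -> good h2.
Proof. by move=> E G x y z; have := G x y z; rewrite /dlt /phi3 !E. Qed.

Lemma good_xor h1 h2 : good h1 -> good h2 -> good (fun x y => h1 x y (+) h2 x y).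
Proof.
move=> G1 G2; apply: (@good_ext (fun x y => \big[addb/false]_(b : bool) (if b then h1 else h2) x y)).
  by move=> x y; rewrite big_bool.
by apply: good_sum => -[].
Qed.

Lemma good_t3 (i j k : 'I_n) : good (fun x y => ((i < j) && (j < k)) && tt3 x y i j k).
Proof.
move=> x y z; rewrite /dlt /phi3 /tt3 !ffunE; case: ((i < j) && (j < k)) => //=.
by case: (x i); case: (x j); case: (x k); case: (y i); case: (y j); case: (y k);
   case: (z i); case: (z j); case: (z k).
Qed.

Lemma good_b2 (c : bool) (i j : 'I_n) : good (fun x y => c && (x i && y j)).
Proof.
move=> x y z; rewrite /dlt /phi3 !ffunE; case: c => //=.
by case: (x i); case: (x j); case: (y i); case: (y j); case: (z i); case: (z j).
Qed.

Lemma good_Fb p : good (Fb p).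
Proof.
apply: good_xor; first apply: good_xor.
- apply: good_sum => i; apply: good_sum => j; apply: good_sum => k; exact: good_t3.
- apply: good_sum => i; apply: good_sum => j; exact: good_b2.
- apply: good_sum => i; exact: good_b2.
Qed.

End Z2.


Section Coh.
Variable n : nat.
Implicit Types x y z : Z2n n.
Local Notation "x +' y" := (z2add x y) (at level 50, left associativity).
Local Notation z0 := (@z0 n).

Definition ev (a : 'I_n) : Z2n n := [ffun i => i == a].
Definition Hm (m : nat) x := [forall i : 'I_n, (m <= i) ==> ~~ x i].

Fixpoint sgc (g : Z2n n -> Z2n n -> bool) (m : nat) x : bool :=
  match m with
  | 0 => false
  | m'.+1 => if (insub m' : option 'I_n) is Some a then
               (if x a then sgc g m' (x +' ev a) (+) g (ev a) (x +' ev a) else sgc g m' x)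
             else sgc g m' x
  end.

Lemma Hm_add m x y : Hm m x -> Hm m y -> Hm m (x +' y).
Proof.
move=> /forallP Hx /forallP Hy; apply/forallP => i; rewrite ffunE.
by have := Hx i; have := Hy i; case: (m <= i) => //= /negbTE -> /negbTE ->.
Qed.

Lemma cobound (g : Z2n n -> Z2n n -> bool) :
  (forall x y z, g y z (+) g (x +' y) z (+) g x (y +' z) (+) g x y = false) ->
  (forall x, g x x = false) ->
  exists sig : Z2n n -> bool, forall x y, g x y = sig x (+) sig y (+) sig (x +' y).
Proof.
move=> c gd.
have c' x y z : g (x +' y) z = g y z (+) g x (y +' z) (+) g x y.
  by have := c x y z; case: (g (x +' y) z); case: (g y z); case: (g x (y +' z)); case: (g x y).
have g0l z : g z0 z = false.
  by have := c' z0 z0 z; rewrite z2addxx z2add0x gd; case: (g z0 z).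
have g0r x : g x z0 = false.
  by have := c' x z0 z0; rewrite z2addxx z2addx0 gd; case: (g x z0).
have gsym x y : g x y = g y x.
  have h2 : g y (x +' y) = g y x.
    by have := c' y y x; rewrite z2addxx g0l z2addC gd; case: (g y x); case: (g y (x +' y)).
  have e1 : y +' (x +' y) = x by rewrite z2addC z2addK.
  have := c' x y (x +' y); rewrite e1 !gd h2.
  by case: (g x y); case: (g y x).
have g1 x y : g (x +' y) y = g x y.
  by have := c' x y y; rewrite z2addxx gd g0r; case: (g x y).
have main m x y : Hm m x -> Hm m y -> g x y = sgc g m x (+) sgc g m y (+) sgc g m (x +' y).
  elim: m x y => [|m IH] x y.
    have H0 w : Hm 0 w -> w = z0.
      move=> /forallP Hw; apply/ffunP => i; rewrite ffunE.
      by have := Hw i; rewrite leq0n /=; case: (w i).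
    by move=> /H0 -> /H0 ->; rewrite gd.
  rewrite /=; case: insubP => [a _ am|nm].
    set e := ev a.
    have down w : Hm m.+1 w -> w a = false -> Hm m w.
      move=> /forallP Hw wa; apply/forallP => i; apply/implyP => mi.
      have [ia|ia] := eqVneq i a; first by rewrite ia wa.
      have mi' : m < i.
        rewrite ltn_neqAle mi andbT; apply/eqP => mi2; case/eqP: ia.
        by apply: val_inj; rewrite /= am mi2.
      by have := Hw i; rewrite mi'.
    have eH : Hm m.+1 e.
      apply/forallP => i; rewrite ffunE; apply/implyP => mi; apply/eqP => ia.
      by move: mi; rewrite ia am ltnn.
    have up w : Hm m w -> Hm m.+1 w.
      move=> /forallP Hw; apply/forallP => i; apply/implyP => mi.
      by have := Hw i; rewrite (ltnW mi).
    have ea : e a = true by rewrite ffunE eqxx.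
    have tf u v : Hm m.+1 u -> Hm m.+1 v -> u a = true -> v a = false ->
       g u v = (sgc g m (u +' e) (+) g e (u +' e)) (+) sgc g m v
               (+) (sgc g m (u +' v +' e) (+) g e (u +' v +' e)).
      move=> Hu Hv ua va.
      set h := u +' e.
      have hH : Hm m h by apply: down; [apply: Hm_add | rewrite /h ffunE ua ea].
      have vH : Hm m v by apply: down.
      have uvE : u +' v +' e = h +' v by rewrite /h -!z2addA (z2addC v e).
      have uE : u = e +' h by rewrite /h z2addC z2addK.
      rewrite uvE.
      have := c' e h v; rewrite -uE => ->; rewrite (IH h v hH vH).
      move: (sgc g m h) (sgc g m v) (sgc g m (h +' v)) (g e (h +' v)) (g e h).
      by do 5 case.
    move=> Hx Hy.
    have xyE : (x +' y) a = x a (+) y a by rewrite ffunE.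
    case xa: (x a); case ya: (y a); rewrite xyE xa ya /=.
    -
      set h := x +' e; set k := y +' e.
      have hH : Hm m h by apply: down; [apply: Hm_add | rewrite /h ffunE xa ea].
      have kH : Hm m k by apply: down; [apply: Hm_add | rewrite /k ffunE ya ea].
      have xyE' : x +' y = h +' k.
        by rewrite /h /k -!z2addA; congr (z2add x); rewrite z2addC -z2addA z2addxx z2addx0.
      have xE : x = h +' e by rewrite /h z2addK.
      have yE : y = e +' k by rewrite /k z2addC z2addK.
      have := c' x e k; rewrite -yE -/h => E1.
      have E2 : g x e = g e h by rewrite xE g1 gsym.
      rewrite xyE'; have := IH h k hH kH; move: E1; rewrite E2.
      move: (g h k) (g e k) (g x y) (g e h) (sgc g m h) (sgc g m k) (sgc g m (h +' k)).
      by do 7 case.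
    - by rewrite (tf x y).
    - rewrite gsym (tf y x) // (z2addC y x).
      move: (sgc g m (y +' e)) (g e (y +' e)) (sgc g m x) (sgc g m (x +' y +' e)) (g e (x +' y +' e)).
      by do 5 case.
    - have hx : Hm m x by apply: down.
      have hy : Hm m y by apply: down.
      exact: IH.
  move=> Hx Hy.
  have down w : Hm m.+1 w -> Hm m w.
    move=> /forallP Hw; apply/forallP => i; apply/implyP => mi.
    have := Hw i; move: mi; rewrite leq_eqVlt => /orP [/eqP mi|->] //.
    by case/negP: nm; rewrite mi ltn_ord.
  exact: IH (down _ Hx) (down _ Hy).
exists (sgc g n) => x y; apply: main; apply/forallP => i; apply/implyP => ni.
  by move: (ltn_ord i); rewrite ltnNge ni.
by move: (ltn_ord i); rewrite ltnNge ni.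
Qed.

End Coh.

Section IsoSec.
Import GRing.Theory Num.Theory.
Local Open Scope ring_scope.

Lemma iso_of (R : realType) n p p' (T Ti : Z2n n -> Z2n n) (sig : Z2n n -> bool) :
  cancel T Ti -> cancel Ti T -> (forall x y, T (z2add x y) = z2add (T x) (T y)) ->
  (forall x y, Fb p x y (+) sig x (+) sig y = Fb p' (T x) (T y) (+) sig (z2add x y)) ->
  graded_iso R n p p'.
Proof.
move=> TK TiK Tadd Hs.
pose sg (x : Z2n n) : R := (-1) ^+ sig x.
have sg2 x : sg x * sg x = 1 by rewrite /sg -signr_addb addbb.
pose phi (a : Oalg R n) : Oalg R n := [ffun z => sg (Ti z) * a (Ti z)].
pose psi (b : Oalg R n) : Oalg R n := [ffun x => sg x * b (T x)].
have ubE (x z : Z2n n) : ub R x z = (z == x)%:R by rewrite ffunE.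
have sE (c d : R) : c *: (d : R^o) = c * d by [].
exists phi; split.
- by move=> a b; apply/ffunP => z; rewrite !ffunE mulrDr.
- by move=> c a; apply/ffunP => z; rewrite !ffunE mulrCA.
- exists psi.
    by move=> a; apply/ffunP => x; rewrite !ffunE TK mulrA sg2 mul1r.
  by move=> b; apply/ffunP => z; rewrite !ffunE TiK mulrA sg2 mul1r.
- move=> a b; apply/ffunP => z.
  rewrite /omul ffunE !sum_ffunE [RHS](reindex_inj (can_inj TK)) mulr_sumr.
  apply: eq_bigr => x _; rewrite !sum_ffunE [RHS](reindex_inj (can_inj TK)) mulr_sumr.
  apply: eq_bigr => y _.
  rewrite !ffunE !TK -Tadd.
  have -> : (z == T (z2add x y)) = (Ti z == z2add x y).
    by apply/eqP/eqP => [->|<-]; rewrite ?TK ?TiK.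
  rewrite !sE; case: eqP => [->|_] /=; last by rewrite !mulr0.
  rewrite !mulr1 -(signr_odd _ (ftw p x y)) -(signr_odd _ (ftw p' _ _)) !odd_ftw.

  have H := Hs x y.
  have -> : Fb p x y = Fb p' (T x) (T y) (+) sig (z2add x y) (+) sig x (+) sig y.
    by rewrite -H; case: (Fb p x y); case: (sig x); case: (sig y).
  move: (Fb p' (T x) (T y)) => f.
  rewrite /sg !signr_addb.
  set A := (-1) ^+ f; set B := (-1) ^+ sig (z2add x y).
  set X := (-1) ^+ sig x; set Y := (-1) ^+ sig y.
  have BB : B * B = 1 by rewrite /B -signr_addb addbb.
  rewrite [LHS](_ : _ = (B * B) * (X * a x * (Y * b y) * A)); last by ring.
  by rewrite BB mul1r.
- move=> x; exists (T x), (sg x); split; first by rewrite /sg signr_eq0.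
  apply/ffunP => z; rewrite !ffunE.
  have -> : (z == T x) = (Ti z == x) by apply/eqP/eqP => [->|<-]; rewrite ?TK ?TiK.
  by rewrite sE; case: eqP => [->|_] /=; rewrite ?mulr1 ?mulr0.
Qed.

End IsoSec.


Lemma mod4_odd c : odd c = odd (c %% 4).
Proof. by rewrite {1}(divn_eq c 4) oddD oddM andbF. Qed.

Lemma mod4_S c : c.+1 %% 4 = (c %% 4).+1 %% 4.
Proof. by rewrite -addn1 -modnDml addn1. Qed.

Lemma restrict_sum n j (F : nat -> bool) : j <= n ->
  \big[addb/false]_(i < n) ((i < j) && F i) = \big[addb/false]_(0 <= i < j) F i.
Proof.
move=> hj; rewrite -(big_mkord xpredT (fun i => (i < j) && F i)).
rewrite (@big_cat_nat _ _ _ j 0 n _ _ (leq0n j) hj) /=.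
rewrite [X in _ (+) X]big_nat_cond [X in _ (+) X]big1 ?addbF.
  by apply: eq_big_nat => i /andP[_ ->].
by move=> i /andP[/andP[ji _] _]; rewrite ltnNge ji.
Qed.

Section Diag.
Variable n : nat.
Implicit Types x m : Z2n n.

Definition Wt x : nat := \sum_(i < n) (x i : nat).
Definition Ip x m : nat := \sum_(i < n) ((x i && m i) : nat).
Definition pmask (p : nat) : Z2n n := [ffun i : 'I_n => i < p].

Lemma Fb_diag p x : Fb p x x = (Wt x %% 4 != 0) (+) odd (Ip x (pmask p)).
Proof.
pose y (k : nat) : bool := if (insub k : option 'I_n) is Some o then x o else false.
have yE (i : 'I_n) : y i = x i by rewrite /y valK.
pose s1 j := \big[addb/false]_(0 <= i < j) y i.
pose s2 j := \big[addb/false]_(0 <= i < j) (y i && s1 i).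
pose s3 j := \big[addb/false]_(0 <= i < j) (y i && s2 i).
pose cnt j := \sum_(0 <= i < j) (y i : nat).
have sf j : [/\ s1 j = odd (cnt j), s2 j = (2 <= cnt j %% 4) & s3 j = (cnt j %% 4 == 3)].
  elim: j => [|j [IH1 IH2 IH3]]; first by rewrite /s1 /s2 /s3 /cnt !big_geq.
  rewrite /s1 /s2 /s3 /cnt !big_nat_recr //= -/(s1 j) -/(s2 j) -/(s3 j) -/(cnt j).
  rewrite IH1 IH2 IH3; case: (y j); last by rewrite /= !addbF addn0.
  rewrite /= addn1 mod4_S oddS [odd (cnt j)]mod4_odd.
  have : cnt j %% 4 < 4 by rewrite ltn_mod.
  by case: (cnt j %% 4) => [|[|[|[|r]]]].
have T3E : \big[addb/false]_(i < n) \big[addb/false]_(j < n) \big[addb/false]_(k < n)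
      (((i < j) && (j < k)) && tt3 x x i j k) = s3 n.
  under eq_bigr => i _ do rewrite exchange_big.
  rewrite exchange_big.
  under eq_bigr => k _ do rewrite exchange_big.
  rewrite /s3 big_mkord; apply: eq_bigr => k _.
  rewrite /s2 -(restrict_sum (fun i => y i && s1 i) (ltnW (ltn_ord k))) -bigxor_andl.
  apply: eq_bigr => j _.
  rewrite /s1 -(restrict_sum y (ltnW (ltn_ord j))).
  transitivity ((y k && ((j < k) && y j)) && \big[addb/false]_(i < n) ((i < j) && y i)); last first.
    by case: (y k); case: (j < k); case: (y j).
  rewrite -bigxor_andl; apply: eq_bigr => i _.
  rewrite /tt3 -!yE.
  by case: (i < j); case: (j < k); case: (y i); case: (y j); case: (y k).
have B2E : \big[addb/false]_(i < n) \big[addb/false]_(j < n) ((i <= j) && (x i && x j))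
     = s2 n (+) s1 n.
  rewrite exchange_big /s2 /s1 -bigxorD big_mkord; apply: eq_bigr => j _.
  transitivity (y j && \big[addb/false]_(i < n) ((i < j.+1) && y i)); last first.
    rewrite (restrict_sum y (ltn_ord j)) big_nat_recr //=; by case: (y j); case: (\big[addb/false]_(0 <= i < j) y i).
  rewrite -bigxor_andl; apply: eq_bigr => i _.
  by rewrite ltnS -!yE; case: (i <= j); case: (y i); case: (y j).
have D1E : \big[addb/false]_(i < n) ((i < p) && (x i && x i)) = odd (Ip x (pmask p)).
  by rewrite /Ip odd_sum; apply: eq_bigr => i _; rewrite oddb ffunE andbb andbC.
have WE : Wt x = cnt n.
  by rewrite /Wt /cnt big_mkord; apply: eq_bigr => i _; rewrite yE.
rewrite /Fb T3E B2E D1E WE; have [e1 e2 e3] := sf n; rewrite e1 e2 e3.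
congr (_ (+) _); rewrite mod4_odd.
have : cnt n %% 4 < 4 by rewrite ltn_mod.
by case: (cnt n %% 4) => [|[|[|[|r]]]].
Qed.

End Diag.


Lemma xor8 (a1 b1 a2 b2 a3 b3 a4 b4 : bool) :
  (a1 (+) b1) (+) (a2 (+) b2) (+) (a3 (+) b3) (+) (a4 (+) b4) =
  (a1 (+) a2 (+) a3 (+) a4) (+) (b1 (+) b2 (+) b3 (+) b4).
Proof. by case: a1; case: b1; case: a2; case: b2; case: a3; case: b3; case: a4; case: b4. Qed.

Lemma iso_of_alpha (R : realType) n p p' (T Ti : Z2n n -> Z2n n) :
  cancel T Ti -> cancel Ti T -> (forall x y, T (z2add x y) = z2add (T x) (T y)) ->
  (forall x, Fb p' (T x) (T x) = Fb p x x) -> graded_iso R n p p'.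
Proof.
move=> TK TiK Tadd Ha.
pose g x y := Fb p x y (+) Fb p' (T x) (T y).
have [sig Hs] : exists sig : Z2n n -> bool, forall x y, g x y = sig x (+) sig y (+) sig (z2add x y).
  apply: cobound.
    move=> x y z; rewrite /g !Tadd xor8.
    have E1 := good_Fb p x y z; have E2 := good_Fb p' (T x) (T y) (T z).
    rewrite /dlt in E1 E2; rewrite E1 E2 /phi3 -!Tadd !Ha.
    by rewrite addbb.
  by move=> x; rewrite /g Ha addbb.
apply: (@iso_of R n p p' T Ti sig TK TiK Tadd) => x y.
have := Hs x y; rewrite /g.
move: (Fb p x y) (Fb p' (T x) (T y)) (sig x) (sig y) (sig (z2add x y)).
by do 5 case.
Qed.

Section Tv.
Variable n : nat.
Implicit Types x y m u v : Z2n n.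
Local Notation "x +' y" := (z2add x y) (at level 50, left associativity).
Local Notation z0 := (@z0 n).
Local Notation ones := (@ones n).

Definition alph m x := (Wt x %% 4 != 0) (+) odd (Ip x m).
Definition tv u v x := x +' (if odd (Ip x u) then v else z0).

Lemma ifvE (b : bool) v i : (if b then v else z0) i = b && v i.
Proof. by case: b; rewrite ?ffunE. Qed.

Lemma Ip_addl x y m : odd (Ip (x +' y) m) = odd (Ip x m) (+) odd (Ip y m).
Proof.
rewrite /Ip !odd_sum -bigxorD; apply: eq_bigr => i _; rewrite !oddb ffunE.
by case: (x i); case: (y i); case: (m i).
Qed.

Lemma Ip_sym x m : Ip x m = Ip m x.
Proof. by apply: eq_bigr => i _; rewrite andbC. Qed.

Lemma Ip_addr x y m : odd (Ip m (x +' y)) = odd (Ip m x) (+) odd (Ip m y).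
Proof. by rewrite !(Ip_sym m) Ip_addl. Qed.

Lemma Ip0 x : Ip x z0 = 0.
Proof. by rewrite /Ip big1 // => i _; rewrite ffunE andbF. Qed.

Lemma Ip_ones x : Ip x ones = Wt x.
Proof. by apply: eq_bigr => i _; rewrite ffunE andbT. Qed.

Lemma Wt_add x v : Wt (x +' v) + 2 * Ip x v = Wt x + Wt v.
Proof.
rewrite /Wt /Ip big_distrr -!big_split /=; apply: eq_bigr => i _; rewrite ffunE.
by case: (x i); case: (v i).
Qed.

Lemma Ip_split x v : Ip x (ones +' v) + Ip x v = Wt x.
Proof.
rewrite /Wt /Ip -big_split /=; apply: eq_bigr => i _; rewrite !ffunE.
by case: (x i); case: (v i).
Qed.

Lemma tv_add u v x y : tv u v (x +' y) = tv u v x +' tv u v y.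
Proof.
rewrite /tv Ip_addl; apply/ffunP => i; rewrite !ffunE !ifvE.
by case: (odd (Ip x u)); case: (odd (Ip y u)); case: (x i); case: (y i); case: (v i).
Qed.

Lemma tv_inv u v x : odd (Ip v u) = false -> tv u v (tv u v x) = x.
Proof.
move=> h; rewrite {1}/tv Ip_addl; apply/ffunP => i; rewrite /tv !ffunE !ifvE.
case: (odd (Ip x u)) => /=; first by rewrite h /= -addbA addbb addbF.
by rewrite Ip_sym Ip0 /= !addbF.
Qed.

Lemma oddB_inv v : odd (Wt v) = false -> odd (Ip v (ones +' v)) = false.
Proof.
move=> h; rewrite Ip_addr Ip_ones h /=.
suff -> : Ip v v = Wt v by rewrite h.
by apply: eq_bigr => i _; rewrite andbb.
Qed.

Lemma oddC_inv v : odd (Wt v) = false -> odd (Ip v v) = false.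
Proof.
move=> h; suff -> : Ip v v = Wt v by rewrite h.
by apply: eq_bigr => i _; rewrite andbb.
Qed.

Lemma tvB_h v x : Wt v %% 4 = 2 ->
  (Wt (tv (ones +' v) v x) %% 4 != 0) = (Wt x %% 4 != 0).
Proof.
move=> hv; rewrite /tv; case: ifP => hl; last by rewrite z2addx0.
have e1 := Wt_add x v; have e2 := Ip_split x v.
have e3 := modn2 (Ip x (ones +' v)); rewrite hl /= in e3.
congr negb; apply/idP/idP => /eqP h; apply/eqP; lia.
Qed.

Lemma tvC_h v x : Wt v %% 4 = 2 ->
  (Wt (tv v v x) %% 4 != 0) = (Wt x %% 4 != 0).
Proof.
move=> hv; rewrite /tv; case: ifP => hl; last by rewrite z2addx0.
have e1 := Wt_add x v.
have e3 := modn2 (Ip x v); rewrite hl /= in e3.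
congr negb; apply/idP/idP => /eqP h; apply/eqP; lia.
Qed.

Lemma alph_tv u v m x :
  (Wt (tv u v x) %% 4 != 0) = (Wt x %% 4 != 0) ->
  alph m (tv u v x) = alph (m +' (if odd (Ip v m) then u else z0)) x.
Proof.
rewrite /alph => ->; congr (_ (+) _).
rewrite /tv Ip_addl Ip_addr.
case lx: (odd (Ip x u)); case lv: (odd (Ip v m)); rewrite ?Ip0 ?(Ip_sym z0) ?Ip0 ?lv ?lx //.
Qed.

Lemma Wt_pmask k : k <= n -> Wt (pmask n k) = k.
Proof.
move=> hk; rewrite /Wt.
under eq_bigr => i _ do rewrite ffunE.
rewrite -(big_mkord xpredT (fun i => nat_of_bool (i < k))).
rewrite (@big_cat_nat _ _ _ k 0 n _ _ (leq0n k) hk) /=.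
rewrite [X in _ + X]big_nat_cond [X in _ + X]big1 ?addn0.
  rewrite (eq_big_nat _ _ (F2 := fun _ => 1)); first by rewrite sum_nat_const_nat subn0 muln1.
  by move=> i /andP[_ ->].
by move=> i /andP[/andP[ki _] _]; rewrite ltnNge ki.
Qed.

Lemma Wt_ones : Wt ones = n.
Proof. by rewrite /Wt (eq_bigr (fun _ => 1)) ?sum_nat_const ?card_ord ?muln1 // => i _; rewrite ffunE. Qed.

Lemma Ip_ev (a : 'I_n) m : odd (Ip (ev a) m) = m a.
Proof.
rewrite /Ip odd_sum (bigD1 a) //= big1 ?addbF; first by rewrite ffunE eqxx oddb.
by move=> i /negbTE ia; rewrite ffunE ia.
Qed.

Lemma Wt_ev_add x (a : 'I_n) : Wt (x +' ev a) = if x a then (Wt x).-1 else (Wt x).+1.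
Proof.
have := Wt_add x (ev a).
have -> : Wt (ev a) = 1.
  rewrite /Wt (bigD1 a) //= big1 ?ffunE ?eqxx // => i /negbTE ia; by rewrite ffunE ia.
have -> : Ip x (ev a) = x a.
  rewrite /Ip (bigD1 a) //= big1 ?ffunE ?eqxx ?andbT ?addn0 // => i /negbTE ia; by rewrite ffunE ia andbF.
case: (x a) => /= h; lia.
Qed.

End Tv.


Ltac bsimp :=
  repeat match goal with
  | |- context [?a == ?b :> nat] =>
      first [ rewrite (_ : (a == b) = false); last by apply/eqP; lia
            | rewrite (_ : (a == b) = true); last by apply/eqP; lia ]
  | |- context [leq ?a ?b] =>
      first [ rewrite (_ : (a <= b) = true); last by lia
            | rewrite (_ : (a <= b) = false); last by apply/negbTE; lia ]
  end.

Lemma odd_mod2 w : w %% 4 = 2 -> odd w = false.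
Proof. by rewrite mod4_odd => ->. Qed.

Lemma Ip0l n (m : Z2n n) : Ip (z0 n) m = 0.
Proof. by rewrite Ip_sym Ip0. Qed.

Lemma Wt0 n : Wt (z0 n) = 0.
Proof. by rewrite /Wt big1 // => i _; rewrite ffunE. Qed.

Lemma case1 (R : realType) p q : 5 <= p -> 1 <= q -> (p + q) %% 4 = 1 ->
  graded_iso R (p + q) p (p - 4).
Proof.
move=> hp hq hn.
have h0 : 0 < p + q by lia.
have hP : p < p + q by lia.
have h4 : p - 4 < p + q by lia.
have h3 : p - 3 < p + q by lia.
have h2 : p - 2 < p + q by lia.
have h1 : p - 1 < p + q by lia.
pose v1 := z2add (z2add (z0 (p + q)) (ev (Ordinal h0))) (ev (Ordinal hP)).
pose v2 := z2add (z2add (z2add (z2add v1 (ev (Ordinal h4))) (ev (Ordinal h3)))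
              (ev (Ordinal h2))) (ev (Ordinal h1)).
have hv1 : Wt v1 %% 4 = 2.
  rewrite /v1 !Wt_ev_add !ffunE -!val_eqE /= Wt0; bsimp; done.
have hv2 : Wt v2 %% 4 = 2.
  rewrite /v2 /v1 !Wt_ev_add !ffunE -!val_eqE /= Wt0; bsimp; done.
pose T x := tv (z2add (ones _) v1) v1 (tv (z2add (ones _) v2) v2 x).
pose Ti x := tv (z2add (ones _) v2) v2 (tv (z2add (ones _) v1) v1 x).
have i1 := oddB_inv (odd_mod2 hv1).
have i2 := oddB_inv (odd_mod2 hv2).
apply: (@iso_of_alpha R (p + q) p (p - 4) T Ti).
- by move=> x; rewrite /T /Ti tv_inv // tv_inv.
- by move=> x; rewrite /T /Ti tv_inv // tv_inv.
- by move=> x y; rewrite /T !tv_add.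
move=> x; rewrite !Fb_diag -/(alph _ (T x)) -/(alph _ x) /T.
rewrite alph_tv ?tvB_h // alph_tv ?tvB_h //.
rewrite /alph; congr (_ (+) odd (Ip x _)).
have e1 : odd (Ip v1 (pmask (p + q) (p - 4))) = true.
  by rewrite /v1 !Ip_addl !Ip_ev Ip0l !ffunE /=; bsimp.
rewrite e1.
have e2 : odd (Ip v2 (z2add (pmask (p + q) (p - 4)) (z2add (ones _) v1))) = true.
  by rewrite /v2 /v1 !Ip_addl !Ip_ev Ip0l !ffunE -!val_eqE /=; bsimp.
rewrite e2; apply/ffunP => i; rewrite /v2 /v1 !ffunE -!val_eqE /=.
case: (ltnP i (p - 4)) => hi; first by bsimp; case: (i == 0 :> nat).
case: (ltnP i p) => hi2; last by bsimp; case: (i == p :> nat).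
have : (i = p - 4 :> nat) \/ (i = p - 3 :> nat) \/ (i = p - 2 :> nat) \/ (i = p - 1 :> nat) by lia.
by case=> [->|[->|[->|->]]]; bsimp.
Qed.

Lemma case2 (R : realType) p q : 2 <= p -> 2 <= q -> ~~ odd p -> (p + q) %% 4 = 1 ->
  graded_iso R (p + q) p (p + 1).
Proof.
move=> hp hq hodd hn.
have h0 : 0 < p + q by lia.
have hP : p < p + q by lia.
have hP1 : p + 1 < p + q by lia.
pose v1 := z2add (z2add (z0 (p + q)) (ev (Ordinal h0))) (ev (Ordinal hP1)).
pose v2 := z2add (z2add (z2add (ones (p + q)) (ev (Ordinal hP))) (ev (Ordinal h0))) (ev (Ordinal hP1)).
have hv1 : Wt v1 %% 4 = 2.
  rewrite /v1 !Wt_ev_add !ffunE -!val_eqE /= Wt0; bsimp; done.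
have hv2 : Wt v2 %% 4 = 2.
  rewrite /v2 !Wt_ev_add !ffunE -!val_eqE /= Wt_ones; bsimp => /=; lia.
pose T x := tv v1 v1 (tv (z2add (ones _) v2) v2 x).
pose Ti x := tv (z2add (ones _) v2) v2 (tv v1 v1 x).
have i1 := oddC_inv (odd_mod2 hv1).
have i2 := oddB_inv (odd_mod2 hv2).
apply: (@iso_of_alpha R (p + q) p (p + 1) T Ti).
- by move=> x; rewrite /T /Ti tv_inv // tv_inv.
- by move=> x; rewrite /T /Ti tv_inv // tv_inv.
- by move=> x y; rewrite /T !tv_add.
move=> x; rewrite !Fb_diag -/(alph _ (T x)) -/(alph _ x) /T.
rewrite alph_tv ?tvC_h // alph_tv ?tvB_h //.
rewrite /alph; congr (_ (+) odd (Ip x _)).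
have e1 : odd (Ip v1 (pmask (p + q) (p + 1))) = true.
  by rewrite /v1 !Ip_addl !Ip_ev Ip0l !ffunE /=; bsimp.
rewrite e1.
have e2 : odd (Ip v2 (z2add (pmask (p + q) (p + 1)) v1)) = true.
  rewrite /v2 !Ip_addl !Ip_ev Ip_sym Ip_addl Ip_ones Wt_pmask; last by lia.
  rewrite /v1 !Ip_addl !Ip_ev Ip0l !ffunE -!val_eqE /=; bsimp.
  by rewrite addn1 /= (negbTE hodd).
rewrite e2; apply/ffunP => i; rewrite /v2 /v1 !ffunE -!val_eqE /=.
case: (ltnP i p) => hi; first by bsimp; case: (i == 0 :> nat).
case: (eqVneq (i : nat) p) => [->|hip]; first by bsimp.
by bsimp; case: (i == p + 1 :> nat).
Qed.

Theorem mainTheorem7 (R : realType) (p q k : nat) :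
  (1 <= k)%N -> (p + q = 4 * k + 1)%N ->
  ((1 <= p - 4)%N -> (1 <= q)%N ->
     graded_iso R (p + q) p (p - 4)) /\
  ((1 <= p)%N -> (1 <= q - 1)%N -> ~~ odd p ->
     graded_iso R (p + q) p (p + 1)).
Proof.
move=> hk hpq; split.
  move=> h1 h2; apply: case1; lia.
move=> h1 h2 h3.
have hp2 : (2 <= p)%N by move: h1 h3; clear; case: p => [|[|p']].
apply: case2 => //; lia.
Qed.
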